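(* Let $m\ge 1$, $\varphi_0>0$ and $\varphi_1\ge 0$. For $\mathbf{g}\in\mathbb{R}^m$ define $$\hat T(\mathbf{g}) = \varphi_0\big(\max(\mathbf{g})-\min(\mathbf{g})\big)^2+\varphi_1\big(\max(\mathbf{g})-\min(\mathbf{g})\big).$$ Then: (i) $\hat T$ is a convex function on $\mathbb{R}^m$. (ii) Its Legendre–Fenchel conjugate $\hat T^*(\boldsymbol\lambda)=\sup_{\mathbf{g}\in\mathbb{R}^m}\big(\mathbf{g}\cdot\boldsymbol\lambda-\hat T(\mathbf{g})\big)$ is given, for every $\boldsymbol\lambda\in\mathbb{R}^m$, by $$\hat T^*(\boldsymbol\lambda)=\begin{cases} s(\|\boldsymbol\lambda\|_1/2) & \text{if } \sum_c\lambda_c=0,\\ +\infty & \text{otherwise,}\end{cases}\qquad s(x)=\begin{cases}\frac{(x-\varphi_1)^2}{4\varphi_0} & x\ge\varphi_1,\\ 0 & x<\varphi_1.\end{cases}$$ (iii) For every $\mathbf{g}\in\mathbb{R}^m$, $\hat T(\mathbf{g})=\hat T^{**}(\mathbf{g})=\sup_{\boldsymbol\lambda\in\mathbb{R}^m}\big(\mathbf{g}\cdot\boldsymbol\lambda-\hat T^*(\boldsymbol\lambda)\big)$.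
   Context: $\max(\mathbf{g})$ and $\min(\mathbf{g})$ denote the largest and smallest components of the vector $\mathbf{g}$, and $\|\cdot\|_1$ is the $\ell_1$ norm. *)

(* Defs.v *)
From HB Require Import structures.
From mathcomp Require Import all_boot all_order all_algebra.
From mathcomp Require Import all_classical all_reals all_analysis.
Set Implicit Arguments. Unset Strict Implicit. Unset Printing Implicit Defensive.
Import Order.TTheory GRing.Theory Num.Theory.
Local Open Scope ring_scope.

Section Defs.
Variable R : realType.

(* first coordinate (used only as the seed of the iterated max/min;
   irrelevant for m >= 1 since max/min are idempotent), 0 if m = 0 *)
Definition vfirst (m : nat) (g : 'rV[R]_m) : R :=
  head 0 [seq g 0 i | i <- enum 'I_m].

Definition vmax (m : nat) (g : 'rV[R]_m) : R :=
  \big[Num.max/vfirst g]_(i < m) g 0 i.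
Definition vmin (m : nat) (g : 'rV[R]_m) : R :=
  \big[Num.min/vfirst g]_(i < m) g 0 i.

Definition vdot (m : nat) (g l : 'rV[R]_m) : R := \sum_(i < m) g 0 i * l 0 i.
Definition norm1 (m : nat) (l : 'rV[R]_m) : R := \sum_(i < m) `|l 0 i|.

Definition That (phi0 phi1 : R) (m : nat) (g : 'rV[R]_m) : R :=
  phi0 * (vmax g - vmin g) ^+ 2 + phi1 * (vmax g - vmin g).

Definition convex_fun (m : nat) (f : 'rV[R]_m -> R) : Prop :=
  forall (g h : 'rV[R]_m) (t : R), 0 <= t -> t <= 1 ->
    f (t *: g + (1 - t) *: h) <= t * f g + (1 - t) * f h.

Definition conj_fun (m : nat) (f : 'rV[R]_m -> R) (l : 'rV[R]_m) : \bar R :=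
  ereal_sup (range (fun g : 'rV[R]_m => ((vdot g l) - f g)%:E)).

Definition conj_efun (m : nat) (f : 'rV[R]_m -> \bar R) (g : 'rV[R]_m) : \bar R :=
  ereal_sup (range (fun l : 'rV[R]_m => ((vdot g l)%:E - f l)%E)).

Definition s_fun (phi0 phi1 : R) (x : R) : R :=
  if phi1 <= x then (x - phi1) ^+ 2 / (4 * phi0) else 0.

End Defs.

(* Main.v *)
Require Import Defs.
From HB Require Import structures.
From mathcomp Require Import all_boot all_order all_algebra.
From mathcomp Require Import all_classical all_reals all_analysis.
From mathcomp Require Import ring lra.
Import Order.TTheory GRing.Theory Num.Theory.
Local Open Scope ring_scope.
Set Implicit Arguments. Unset Strict Implicit.

Section S.
Variable R : realType.

Lemma bigmax_seq (I : eqType) (r : seq I) (F : I -> R) (x : R) :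
  (forall i, i \in r -> F i <= \big[Num.max/x]_(j <- r) F j) /\
  (\big[Num.max/x]_(j <- r) F j = x \/ exists2 i, i \in r & \big[Num.max/x]_(j <- r) F j = F i).
Proof.
elim: r => [|a r [IH1 IH2]]; first by rewrite big_nil; split => //; left.
rewrite big_cons; split.
  move=> i; rewrite inE => /orP [/eqP -> | ir]; first by rewrite le_max lexx.
  by rewrite le_max (IH1 _ ir) orbT.
case: (leP (F a) (\big[Num.max/x]_(j <- r) F j)) => h.
  case: IH2 => [H|[i ir H]]; first by left.
  by right; exists i; [rewrite inE ir orbT | ].
right; exists a; [by rewrite inE eqxx | by []].
Qed.

Lemma bigmin_seq (I : eqType) (r : seq I) (F : I -> R) (x : R) :
  (forall i, i \in r -> \big[Num.min/x]_(j <- r) F j <= F i) /\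
  (\big[Num.min/x]_(j <- r) F j = x \/ exists2 i, i \in r & \big[Num.min/x]_(j <- r) F j = F i).
Proof.
elim: r => [|a r [IH1 IH2]]; first by rewrite big_nil; split => //; left.
rewrite big_cons; split.
  move=> i; rewrite inE => /orP [/eqP -> | ir]; first by rewrite ge_min lexx.
  by rewrite ge_min (IH1 _ ir) orbT.
case: (leP (F a) (\big[Num.min/x]_(j <- r) F j)) => h.
  right; exists a; [by rewrite inE eqxx | by []].
case: IH2 => [H|[i ir H]]; first by left.
by right; exists i; [rewrite inE ir orbT | ].
Qed.

Lemma vfirstE m (hm : (0 < m)%N) (g : 'rV[R]_m) : exists j, vfirst g = g 0 j.
Proof.
case: m hm g => // m _ g; exists ord0; by rewrite /vfirst enum_ordSl.
Qed.

Lemma vmax_ub m (g : 'rV[R]_m) i : g 0 i <= vmax g.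
Proof. by case: (@bigmax_seq _ (index_enum 'I_m) (fun i => g 0 i) (vfirst g)) => H _; apply: H; rewrite mem_index_enum. Qed.

Lemma vmin_lb m (g : 'rV[R]_m) i : vmin g <= g 0 i.
Proof. by case: (@bigmin_seq _ (index_enum 'I_m) (fun i => g 0 i) (vfirst g)) => H _; apply: H; rewrite mem_index_enum. Qed.

Lemma vmax_att m (hm : (0 < m)%N) (g : 'rV[R]_m) : exists j, vmax g = g 0 j.
Proof.
case: (@bigmax_seq _ (index_enum 'I_m) (fun i => g 0 i) (vfirst g)) => _ [H|[i _ H]].
  by rewrite /vmax H; apply: vfirstE.
by exists i.
Qed.

Lemma vmin_att m (hm : (0 < m)%N) (g : 'rV[R]_m) : exists j, vmin g = g 0 j.
Proof.
case: (@bigmin_seq _ (index_enum 'I_m) (fun i => g 0 i) (vfirst g)) => _ [H|[i _ H]].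
  by rewrite /vmin H; apply: vfirstE.
by exists i.
Qed.


Lemma vmin_le_vmax m (hm : (0 < m)%N) (g : 'rV[R]_m) : vmin g <= vmax g.
Proof. by have [j ->] := vmax_att hm g; apply: vmin_lb. Qed.

Lemma F_mono (p0 p1 a d : R) : 0 < p0 -> 0 <= p1 -> 0 <= a -> a <= d ->
  p0 * a ^+ 2 + p1 * a <= p0 * d ^+ 2 + p1 * d.
Proof.
move=> h0 h1 ha hd.
have e2 : 0 <= p0 * ((d - a) * (d + a)) by apply: mulr_ge0; [lra | apply: mulr_ge0; lra].
have e3 : 0 <= p1 * (d - a) by apply: mulr_ge0; lra.
have -> : p0 * d ^+ 2 + p1 * d = p0 * a ^+ 2 + p1 * a + (p0 * ((d - a) * (d + a)) + p1 * (d - a)) by ring.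
lra.
Qed.

Lemma That_convex m (hm : (0 < m)%N) (p0 p1 : R) : 0 < p0 -> 0 <= p1 ->
  convex_fun (@That R p0 p1 m).
Proof.
move=> h0 h1 g h t t0 t1; rewrite /That.
set c := t *: g + (1 - t) *: h.
have [j Ej] := vmax_att hm c; have [k Ek] := vmin_att hm c.
have Hj : vmax c <= t * vmax g + (1 - t) * vmax h.
  rewrite Ej /c !mxE.
  have := vmax_ub g j; have := vmax_ub h j; nra.
have Hk : t * vmin g + (1 - t) * vmin h <= vmin c.
  rewrite Ek /c !mxE.
  have := vmin_lb g k; have := vmin_lb h k; nra.
have Dc := vmin_le_vmax hm c; have Dg := vmin_le_vmax hm g; have Dh := vmin_le_vmax hm h.
set D := vmax c - vmin c; set a := vmax g - vmin g; set b := vmax h - vmin h.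
have HD : D <= t * a + (1 - t) * b by rewrite /D /a /b; lra.
have D0 : 0 <= D by rewrite /D; lra.
have a0 : 0 <= a by rewrite /a; lra.
have b0 : 0 <= b by rewrite /b; lra.
apply: (le_trans (F_mono h0 h1 D0 HD)).
have e : 0 <= t * (1 - t) * (a - b) ^+ 2.
  by apply: mulr_ge0; [apply: mulr_ge0; lra | apply: sqr_ge0].
have e2 : (t * a + (1 - t) * b) ^+ 2 <= t * a ^+ 2 + (1 - t) * b ^+ 2.
  have -> : t * a ^+ 2 + (1 - t) * b ^+ 2 = (t * a + (1 - t) * b) ^+ 2 + t * (1 - t) * (a - b) ^+ 2 by ring.
  lra.
have e3 := ler_wpM2l (ltW h0) e2.
have -> : t * (p0 * a ^+ 2 + p1 * a) + (1 - t) * (p0 * b ^+ 2 + p1 * b) =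
  p0 * (t * a ^+ 2 + (1 - t) * b ^+ 2) + p1 * (t * a + (1 - t) * b) by ring.
lra.
Qed.


Lemma s_bound (p0 p1 x d : R) : 0 < p0 -> 0 <= d ->
  d * x - (p0 * d ^+ 2 + p1 * d) <= s_fun p0 p1 x.
Proof.
move=> h0 hd; rewrite /s_fun; case: ifP => hx.
  have p0n : p0 != 0 by rewrite gt_eqF.
  have -> : (x - p1) ^+ 2 / (4 * p0) = d * x - (p0 * d ^+ 2 + p1 * d) + (x - p1 - 2 * p0 * d) ^+ 2 / (4 * p0).
    by field.
  rewrite lerDl; apply: divr_ge0; [apply: sqr_ge0 | lra].
move/negbT: hx; rewrite -ltNge => hx.
have : 0 <= d * (p1 - x) by apply: mulr_ge0; lra.
have : 0 <= p0 * d ^+ 2 by apply: mulr_ge0; [lra | apply: sqr_ge0].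
move=> *; lra.
Qed.

Lemma s_attain (p0 p1 x : R) : 0 < p0 -> 0 <= p1 -> exists d, 0 <= d /\
  d * x - (p0 * d ^+ 2 + p1 * d) = s_fun p0 p1 x.
Proof.
move=> h0 h1; rewrite /s_fun; case: ifP => hx.
  have p0n : p0 != 0 by rewrite gt_eqF.
  exists ((x - p1) / (2 * p0)); split; first by apply: divr_ge0; lra.
  by field.
by exists 0; split; [by [] | ring].
Qed.

Lemma dot_bound m (hm : (0 < m)%N) (g l : 'rV[R]_m) : \sum_(i < m) l 0 i = 0 ->
  vdot g l <= (vmax g - vmin g) * (norm1 l / 2).
Proof.
move=> H.
have E1 : vdot g l = \sum_(i < m) (g 0 i - vmin g) * l 0 i.
  rewrite /vdot; under [RHS]eq_bigr do rewrite mulrBl.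
  by rewrite sumrB -mulr_sumr H mulr0 subr0.
have E2 : \sum_(i < m) (vmax g - vmin g) * ((`|l 0 i| + l 0 i) / 2) = (vmax g - vmin g) * (norm1 l / 2).
  by rewrite -mulr_sumr -mulr_suml big_split /= H addr0.
rewrite E1 -E2; apply: ler_sum => i _.
have := vmin_lb g i; have := vmax_ub g i.
case: (lerP 0 (l 0 i)) => [/[dup] hl /ger0_norm -> | /[dup] hl /ltr0_norm ->] => *.
  have -> : (l 0 i + l 0 i) / 2 = l 0 i by field.
  by apply: ler_wpM2r => //; lra.
have -> : (- l 0 i + l 0 i) / 2 = 0 by field.
rewrite mulr0; nra.
Qed.

Lemma That_le m (hm : (0 < m)%N) (p0 p1 d : R) (g : 'rV[R]_m) : 0 < p0 -> 0 <= p1 ->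
  (forall i, 0 <= g 0 i <= d) -> That p0 p1 g <= p0 * d ^+ 2 + p1 * d.
Proof.
move=> h0 h1 Hg; rewrite /That; apply: F_mono => //.
  by have := vmin_le_vmax hm g; lra.
have [j ->] := vmax_att hm g; have [k ->] := vmin_att hm g.
by have := Hg j; have := Hg k; lra.
Qed.

Lemma That_const m (hm : (0 < m)%N) (p0 p1 c : R) :
  That p0 p1 (const_mx c : 'rV[R]_m) = 0.
Proof.
rewrite /That; have [j ->] := vmax_att hm (const_mx c : 'rV[R]_m).
have [k ->] := vmin_att hm (const_mx c : 'rV[R]_m).
by rewrite !mxE subrr expr0n /= !mulr0 addr0.
Qed.


Lemma conj_That m (hm : (0 < m)%N) (p0 p1 : R) (l : 'rV[R]_m) : 0 < p0 -> 0 <= p1 ->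
  conj_fun (@That R p0 p1 m) l =
     (if \sum_(i < m) l 0 i == 0
      then (s_fun p0 p1 (norm1 l / 2))%:E
      else +oo%E).
Proof.
move=> h0 h1; rewrite /conj_fun; case: eqP => H.
  apply/eqP; rewrite eq_le; apply/andP; split.
    apply: ge_ereal_sup => _ [g _ <-]; rewrite lee_fin.
    have := dot_bound hm g H.
    have := s_bound p1 (norm1 l / 2) h0 (_ : 0 <= vmax g - vmin g).
    have := vmin_le_vmax hm g.
    rewrite /That => D1 D2 D3.
    have := D2 ltac:(lra); lra.
  have [d [d0 <-]] := s_attain (norm1 l / 2) h0 h1.
  set g := \row_(i < m) (if 0 <= l 0 i then d else 0).
  apply: (@le_trans _ _ ((vdot g l - That p0 p1 g)%:E)); last by apply: ereal_sup_ubound; exists g.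
  rewrite lee_fin.
  have Hg : forall i, 0 <= g 0 i <= d by move=> i; rewrite /g mxE; case: ifP; lra.
  have Td := That_le hm h0 h1 Hg.
  suff -> : vdot g l = d * (norm1 l / 2) by lra.
  rewrite /vdot /norm1.
  have -> : \sum_(i < m) `|l 0 i| = \sum_(i < m) (`|l 0 i| + l 0 i) by rewrite big_split /= H addr0.
  rewrite mulr_suml mulr_sumr; apply: eq_bigr => i _; rewrite /g mxE.
  case: (lerP 0 (l 0 i)) => [/[dup] hl /ger0_norm -> | /[dup] hl /ltr0_norm ->]; by field.
set S := \sum_(i < m) l 0 i.
have key : forall M : R, (M%:E < ereal_sup (range (fun g : 'rV[R]_m => (vdot g l - That p0 p1 g)%:E)))%E.
  move=> M.
  apply: (@lt_le_trans _ _ ((vdot (const_mx ((M + 1) / S) : 'rV[R]_m) l - That p0 p1 (const_mx ((M + 1) / S) : 'rV[R]_m))%:E)); last by apply: ereal_sup_ubound; exists (const_mx ((M + 1) / S)).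
  rewrite lte_fin That_const // subr0.
  have -> : vdot (const_mx ((M + 1) / S) : 'rV[R]_m) l = M + 1.
    rewrite /vdot; under eq_bigr do rewrite mxE.
    rewrite -mulr_sumr -/S; by rewrite divfK //; apply/eqP.
  lra.
case E: (ereal_sup _) key => [r| |] key //.
  by have := key r; rewrite ltxx.
by have := key 0; rewrite ltNge leNye.
Qed.


Lemma sum2 m (F : 'I_m -> R) (j k : 'I_m) : j != k ->
  (forall i, i != j -> i != k -> F i = 0) -> \sum_(i < m) F i = F j + F k.
Proof.
move=> jk HF; rewrite (bigD1 j) //= (bigD1 k) /=; last by rewrite eq_sym.
rewrite big1 ?addr0 // => i /andP [ij ik]; exact: HF.
Qed.

Lemma bicon m (hm : (0 < m)%N) (p0 p1 : R) (g : 'rV[R]_m) : 0 < p0 -> 0 <= p1 ->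
  (That p0 p1 g)%:E = conj_efun (conj_fun (@That R p0 p1 m)) g.
Proof.
move=> h0 h1; rewrite /conj_efun; apply/eqP; rewrite eq_le; apply/andP; split; last first.
  apply: ge_ereal_sup => _ [l _ <-].
  have U : ((vdot g l - That p0 p1 g)%:E <= conj_fun (@That R p0 p1 m) l)%E.
    by apply: ereal_sup_ubound; exists g.
  move: U; case: (conj_fun _ l) => [r| |] U.
  - by rewrite -EFinB lee_fin; move: U; rewrite lee_fin; lra.
  - by rewrite addeNy leNye.
  - by move: U; rewrite leeNy_eq.
have [j Ej] := vmax_att hm g; have [k Ek] := vmin_att hm g.
case: (eqVneq j k) => jk.
  have T0 : That p0 p1 g = 0 by rewrite /That Ej Ek jk subrr expr0n /= !mulr0 addr0.
  set l0 := (const_mx 0 : 'rV[R]_m).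
  apply: (@le_trans _ _ ((vdot g l0)%:E - conj_fun (@That R p0 p1 m) l0)%E); last first.
    by apply: ereal_sup_ubound; exists l0.
  rewrite conj_That //.
  have -> : \sum_(i < m) l0 0 i = 0 by rewrite big1 // => i _; rewrite mxE.
  have -> : norm1 l0 = 0 by rewrite /norm1 big1 // => i _; rewrite mxE normr0.
  have -> : vdot g l0 = 0 by rewrite /vdot big1 // => i _; rewrite mxE mulr0.
  rewrite eqxx -EFinB lee_fin T0 mul0r /s_fun; case: ifP => hp; last by rewrite subr0.
  have -> : p1 = 0 by lra.
  by rewrite subrr expr0n /= mul0r subr0.
set d := vmax g - vmin g.
set x := 2 * p0 * d + p1.
have d0 : 0 <= d by rewrite /d; have := vmin_le_vmax hm g; lra.
have pd : 0 <= p0 * d by apply: mulr_ge0; lra.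
have x0 : 0 <= x by rewrite /x; lra.
set l := \row_(i < m) (x * ((i == j)%:R - (i == k)%:R)).
have lj : l 0 j = x by rewrite /l mxE eqxx (negbTE jk) subr0 mulr1.
have lk : l 0 k = - x by rewrite /l mxE eqxx eq_sym (negbTE jk) sub0r mulrN1.
have lo : forall i, i != j -> i != k -> l 0 i = 0.
  by move=> i ij ik; rewrite /l mxE (negbTE ij) (negbTE ik) subrr mulr0.
apply: (@le_trans _ _ ((vdot g l)%:E - conj_fun (@That R p0 p1 m) l)%E); last first.
  by apply: ereal_sup_ubound; exists l.
rewrite conj_That //.
have -> : \sum_(i < m) l 0 i = 0.
  by rewrite (@sum2 _ _ j k) // ?lj ?lk ?subrr // => i ij ik; rewrite lo.
have -> : norm1 l = 2 * x.
  rewrite /norm1 (@sum2 _ (fun i => `|l 0 i|) j k) //= ?lj ?lk ?normrN ?ger0_norm //.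
    by ring.
  by move=> i ij ik; rewrite lo // normr0.
have -> : vdot g l = x * d.
  rewrite /vdot (@sum2 _ (fun i => g 0 i * l 0 i) j k) //= ?lj ?lk -?Ej -?Ek /d.
    by ring.
  by move=> i ij ik; rewrite lo // mulr0.
rewrite eqxx -EFinB lee_fin /s_fun.
have -> : 2 * x / 2 = x by field.
have -> : (p1 <= x) = true by apply/idP; rewrite /x; lra.
rewrite /That -/d /x.
have p0n : p0 != 0 by rewrite gt_eqF.
suff -> : (2 * p0 * d + p1) * d - (2 * p0 * d + p1 - p1) ^+ 2 / (4 * p0) = p0 * d ^+ 2 + p1 * d by [].
by field.
Qed.

End S.
Unset Implicit Arguments.

Theorem mainTheorem1 (R : realType) (m : nat) (phi0 phi1 : R)
  (hm : (0 < m)%N) (hphi0 : 0 < phi0) (hphi1 : 0 <= phi1) :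
  convex_fun (@That R phi0 phi1 m) /\
  (forall l : 'rV[R]_m,
     conj_fun (@That R phi0 phi1 m) l =
     (if \sum_(i < m) l 0 i == 0
      then (s_fun phi0 phi1 (norm1 l / 2))%:E
      else +oo%E)) /\
  (forall g : 'rV[R]_m,
     (That phi0 phi1 g)%:E = conj_efun (conj_fun (@That R phi0 phi1 m)) g).
Proof.
split; first exact: (@That_convex R).
split => [l|g]; [exact: (@conj_That R) | exact: (@bicon R)].
Qed.
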